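(* Let $L,L'$ be finite simplicial complexes and $\varphi: L\to L'$ a bijective simplicial finite-fibration. Then $$\mathrm{scat}(\varphi)\le\mathrm{scat}(L)\le\mathrm{TC}(\varphi)\le\mathrm{TC}(L)\le\mathrm{scat}(L\times L).$$
   Context: Simplicial complexes are abstract and edge-path connected; $K\times K'$ is the categorical product (vertex set $\mathrm{VX}(K)\times\mathrm{VX}(K')$; a set of vertices is a simplex iff both projections are simplices). Simplicial maps $f,g: K\to K'$ are contiguous if $f(\sigma)\cup g(\sigma)$ is a simplex for every simplex $\sigma$; $f\sim g$ if joined by a finite chain of contiguous simplicial maps. $\mathrm{SD}(\varphi_1,\varphi_2)$ for simplicial maps $K\to K'$ is the least $k\ge0$ such that $K$ is a union of subcomplexes $K_0,\dots,K_k$ with $\varphi_1|_{K_j}\sim\varphi_2|_{K_j}$ for all $j$. With $p_1,p_2: L\times L\to L$ the projections, $\mathrm{TC}(L)=\mathrm{SD}(p_1,p_2)$. For a complex $K$, a vertex $v_0$ of $K$ and constant map $c_{v_0}: K\to K$: $\mathrm{scat}(K)=\mathrm{SD}(1_K,c_{v_0})$; for $\varphi: L\to L'$, $\mathrm{scat}(\varphi)=\mathrm{SD}(\varphi,\varphi\circ c_{v_0})$. $I_m$ is the complex with vertices $0,\dots,m$ and edges $\{i,i+1\}$; $\varphi$ is a simplicial finite-fibration if for every finite complex $N$, $m\ge1$, inclusion $i: N\times\{0\}\to N\times I_m$ and simplicial $g: N\times\{0\}\to L$, $G: N\times I_m\to L'$ with $\varphi\circ g=G\circ i$, there is simplicial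 $\widetilde G$ with $\widetilde G\circ i=g$, $\varphi\circ\widetilde G=G$. $\mathrm{TC}(\varphi)$ is the simplicial Schwarz genus of $\pi_\varphi: L^I\to L\times L'$, $\delta\mapsto(\delta(0),\varphi(\delta(1)))$, where $L^I$ is the simplicial path complex of $L$; the simplicial Schwarz genus of $p: E\to B$ is the least $k\ge0$ such that $B$ is a union of subcomplexes $B_0,\dots,B_k$ each admitting a simplicial $s: B_j\to E$ with $p\circ s$ the inclusion. *)

(* Defs.v *)
From Stdlib Require Import List Relations Classical ClassicalEpsilon
  FunctionalExtensionality PropExtensionality.

Definition vset (V : Type) := V -> Prop.
Definition subset {V} (t s : vset V) := forall x, t x -> s x.
Definition nonempty {V} (s : vset V) := exists x, s x.
Definition finite_set {V} (s : vset V) := exists l : list V, forall x, s x -> In x l.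
Definition single {V} (v : V) : vset V := fun x => x = v.
Definition pairset {V} (v w : V) : vset V := fun x => x = v \/ x = w.
Definition image {V W} (f : V -> W) (s : vset V) : vset W :=
  fun y => exists x, s x /\ f x = y.
Definition union {V} (s t : vset V) : vset V := fun x => s x \/ t x.

(* A complex is given by its vertex type and its set of simplices; every
   element of [vtx K] is a vertex (see [is_complex]). *)
Record SC := mkSC { vtx : Type; simp : vset vtx -> Prop }.

Definition is_complex (K : SC) : Prop :=
  (forall s, simp K s -> finite_set s) /\
  (forall s, simp K s -> nonempty s) /\
  (forall s t, simp K s -> subset t s -> nonempty t -> simp K t) /\
  (forall v : vtx K, simp K (single v)).

Definition finite_complex (K : SC) : Prop :=
  is_complex K /\ exists l : list (vtx K), forall v, In v l.

Definition edge_connected (K : SC) : Prop :=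
  forall v w : vtx K,
    clos_refl_trans (vtx K) (fun a b => simp K (pairset a b)) v w.

Definition simplicial {K K' : SC} (f : vtx K -> vtx K') : Prop :=
  forall s, simp K s -> simp K' (image f s).

(* categorical product *)
Definition prodSC (K K' : SC) : SC :=
  mkSC (vtx K * vtx K')
       (fun s => simp K (image fst s) /\ simp K' (image snd s)).

Definition is_subcomplex (K : SC) (S : vset (vtx K) -> Prop) : Prop :=
  (forall s, S s -> simp K s) /\
  (forall s t, S s -> subset t s -> nonempty t -> S t).

Definition simp_on {K : SC} (S : vset (vtx K) -> Prop) (K' : SC)
  (f : vtx K -> vtx K') : Prop :=
  forall s, S s -> simp K' (image f s).

Definition contig_on {K : SC} (S : vset (vtx K) -> Prop) (K' : SC)
  (f g : vtx K -> vtx K') : Prop :=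
  forall s, S s -> simp K' (union (image f s) (image g s)).

(* f|_S ~ g|_S : joined by a finite chain of contiguous simplicial maps S -> K'
   (values of the maps off the vertices of S are irrelevant) *)
Definition homot_on {K : SC} (S : vset (vtx K) -> Prop) (K' : SC)
  (f g : vtx K -> vtx K') : Prop :=
  clos_refl_trans (vtx K -> vtx K')
    (fun a b => simp_on S K' a /\ simp_on S K' b /\ contig_on S K' a b) f g.

(* the least natural number satisfying P (meaningful when one exists) *)
Definition least (P : nat -> Prop) : nat :=
  epsilon (inhabits 0) (fun n => P n /\ forall m, P m -> n <= m).

Definition covers (K : SC) (k : nat) (S : nat -> vset (vtx K) -> Prop) : Prop :=
  (forall j, j <= k -> is_subcomplex K (S j)) /\
  (forall s, simp K s -> exists j, j <= k /\ S j s).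

Definition SD {K K' : SC} (phi1 phi2 : vtx K -> vtx K') : nat :=
  least (fun k => exists S, covers K k S /\
            forall j, j <= k -> homot_on (S j) K' phi1 phi2).

Definition TC (L : SC) : nat :=
  @SD (prodSC L L) L fst snd.

Definition scat (K : SC) (v0 : vtx K) : nat :=
  @SD K K (fun v => v) (fun _ => v0).

Definition scat_map {L L' : SC} (phi : vtx L -> vtx L') (v0 : vtx L) : nat :=
  @SD L L' phi (fun _ => phi v0).

Definition Im (m : nat) : SC :=
  mkSC {i : nat | i <= m}
       (fun s => nonempty s /\
          exists i, forall x, s x -> proj1_sig x = i \/ proj1_sig x = S i).

Definition Im_zero (m : nat) : vtx (Im m) := exist _ 0 (le_0_n m).

(* inclusion N x {0} -> N x I_m  (here {0} = I_0) *)
Definition incl0 (N : SC) (m : nat) (x : vtx (prodSC N (Im 0))) :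
  vtx (prodSC N (Im m)) := (fst x, Im_zero m).

Definition finite_fibration {L L' : SC} (phi : vtx L -> vtx L') : Prop :=
  forall (N : SC), finite_complex N -> edge_connected N ->
  forall m : nat, 1 <= m ->
  forall (g : vtx (prodSC N (Im 0)) -> vtx L)
         (G : vtx (prodSC N (Im m)) -> vtx L'),
    simplicial g -> simplicial G ->
    (forall x, phi (g x) = G (incl0 N m x)) ->
    exists Gt : vtx (prodSC N (Im m)) -> vtx L,
      simplicial Gt /\
      (forall x, Gt (incl0 N m x) = g x) /\
      (forall y, phi (Gt y) = G y).

(* L^I is the direct limit of the exponential complexes L^{I_m} along the maps
   induced by I_{m+1} -> I_m, i |-> min(i, m).  A vertex is thus a simplicial
   path extended stationarily: a function gamma : nat -> L, eventually
   constant, with {gamma i, gamma (i+1)} a simplex for all i. *)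
Definition is_path (L : SC) (gamma : nat -> vtx L) : Prop :=
  (forall i, simp L (pairset (gamma i) (gamma (S i)))) /\
  (exists m, forall i, m <= i -> gamma i = gamma m).

Definition path (L : SC) := {gamma : nat -> vtx L | is_path L gamma}.

Definition pathSC (L : SC) : SC :=
  mkSC (path L)
       (fun s => finite_set s /\ nonempty s /\
          forall i, simp L (fun v => exists d, s d /\
                     (v = proj1_sig d i \/ v = proj1_sig d (S i)))).

Definition path_start {L : SC} (d : path L) : vtx L := proj1_sig d 0.

Definition path_end {L : SC} (d : path L) : vtx L :=
  proj1_sig d (proj1_sig (constructive_indefinite_description _
                            (proj2 (proj2_sig d)))).

Definition schwarz_genus {E B : SC} (p : vtx E -> vtx B) : nat :=
  least (fun k => exists Bs, covers B k Bs /\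
    forall j, j <= k -> exists s : vtx B -> vtx E,
      simp_on (Bs j) E s /\
      (forall v, Bs j (single v) -> p (s v) = v)).

Definition pi_phi {L L' : SC} (phi : vtx L -> vtx L') (d : vtx (pathSC L)) :
  vtx (prodSC L L') := (path_start d, phi (path_end d)).

Definition TC_map {L L' : SC} (phi : vtx L -> vtx L') : nat :=
  @schwarz_genus (pathSC L) (prodSC L L') (pi_phi phi).

(* Main.v *)
Require Import Defs.
From Stdlib Require Import List Relations Classical ClassicalEpsilon
  FunctionalExtensionality PropExtensionality Lia Arith PeanoNat.

Definition PSD {K K' : SC} (f g : vtx K -> vtx K') (k : nat) : Prop :=
  exists S, covers K k S /\ forall j, j <= k -> homot_on (S j) K' f g.

Definition PSG {E B : SC} (p : vtx E -> vtx B) (k : nat) : Prop :=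
  exists Bs, covers B k Bs /\
    forall j, j <= k -> exists s : vtx B -> vtx E,
      simp_on (Bs j) E s /\ (forall v, Bs j (single v) -> p (s v) = v).

Lemma SD_eq {K K'} (f g : vtx K -> vtx K') : SD f g = least (PSD f g).
Proof. reflexivity. Qed.
Lemma SG_eq {E B} (p : vtx E -> vtx B) : schwarz_genus p = least (PSG p).
Proof. reflexivity. Qed.

Lemma least_spec (P : nat -> Prop) : (exists n, P n) ->
  P (least P) /\ forall m, P m -> least P <= m.
Proof.
  intros H. unfold least. apply epsilon_spec.
  destruct H as [n Hn]. revert Hn.
  induction n as [n IH] using (well_founded_induction lt_wf).
  intros Hn.
  destruct (classic (exists m, m < n /\ P m)) as [[m [Hm1 Hm2]]|Hno].
  - exact (IH m Hm1 Hm2).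
  - exists n. split; auto. intros m Hm. destruct (le_lt_dec n m); auto.
    exfalso; apply Hno; eauto.
Qed.

Lemma least_mono (P Q : nat -> Prop) : (exists n, P n) -> (forall n, P n -> Q n) ->
  least Q <= least P.
Proof.
  intros HP HPQ. destruct (least_spec P HP) as [H1 _].
  assert (HQ: exists n, Q n) by (exists (least P); auto).
  destruct (least_spec Q HQ) as [_ H2]. apply H2, HPQ, H1.
Qed.

Lemma face {K} (hK : is_complex K) s t : simp K s -> subset t s -> nonempty t -> simp K t.
Proof. destruct hK as (_&_&H&_). eauto. Qed.
Lemma simp_ne {K} (hK : is_complex K) s : simp K s -> nonempty s.
Proof. destruct hK as (_&H&_&_). eauto. Qed.
Lemma simp_fin {K} (hK : is_complex K) s : simp K s -> finite_set s.
Proof. destruct hK as (H&_&_&_). eauto. Qed.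
Lemma simp_single {K} (hK : is_complex K) v : simp K (single v).
Proof. destruct hK as (_&_&_&H). eauto. Qed.
Lemma simp_sub_single {K} (hK : is_complex K) t v :
  nonempty t -> subset t (single v) -> simp K t.
Proof. intros H1 H2. exact (face hK _ _ (simp_single hK v) H2 H1). Qed.

Lemma crt_seq {A} (R : relation A) x y : clos_refl_trans A R x y ->
  exists n (a : nat -> A), a 0 = x /\ (forall i, n <= i -> a i = y) /\
    (forall i, i < n -> R (a i) (a (S i))).
Proof.
  intros H. apply clos_rt_rt1n in H. induction H as [x|x y z Hxy Hyz IH].
  - exists 0, (fun _ => x). split; [reflexivity|split; [intros; reflexivity|intros; lia]].
  - destruct IH as [n [a [Ha0 [Han Hst]]]].
    exists (S n), (fun i => match i with 0 => x | S i' => a i' end).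
    split; [reflexivity|split].
    + intros [|i] Hi; [lia| apply Han; lia].
    + intros [|i] Hi; [rewrite Ha0; exact Hxy | apply Hst; lia].
Qed.

Lemma seq_crt {A} (R : relation A) (a : nat -> A) n :
  (forall i, i < n -> R (a i) (a (S i))) -> clos_refl_trans A R (a 0) (a n).
Proof.
  induction n; intros H. apply rt_refl. eapply rt_trans.
  apply IHn; intros; apply H; lia. apply rt_step, H; lia.
Qed.

Lemma crt_map {A B} (R : relation A) (R' : relation B) (F : A -> B) x y :
  (forall a b, R a b -> R' (F a) (F b)) -> clos_refl_trans A R x y ->
  clos_refl_trans B R' (F x) (F y).
Proof.
  intros H C; induction C; [apply rt_step; auto | apply rt_refl | eapply rt_trans; eauto].
Qed.

Lemma crt_sym {A} (R : relation A) x y : (forall a b, R a b -> R b a) ->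
  clos_refl_trans A R x y -> clos_refl_trans A R y x.
Proof.
  intros H C; induction C; [apply rt_step; auto | apply rt_refl | eapply rt_trans; eauto].
Qed.

Lemma homot_trans {K K'} (S : vset (vtx K) -> Prop) f g h :
  homot_on S K' f g -> homot_on S K' g h -> homot_on S K' f h.
Proof. unfold homot_on. intros; eapply rt_trans; eauto. Qed.

Lemma homot_comp {K M M' : SC} (S : vset (vtx K) -> Prop) (F : vtx M -> vtx M')
  (hF : simplicial F) (hM' : is_complex M') (hS : forall s, S s -> nonempty s)
  (a b : vtx K -> vtx M) :
  homot_on S M a b -> homot_on S M' (fun x => F (a x)) (fun x => F (b x)).
Proof.
  unfold homot_on. apply (crt_map _ _ (fun f x => F (f x)) a b).
  intros f g (Hf & Hg & Hfg).
  assert (SO : forall h, simp_on S M h -> simp_on S M' (fun x => F (h x))).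
  { intros h Hh s Hs. apply (face hM' (image F (image h s))). apply hF, Hh, Hs.
    intros y [x [Hx Hy]]. exists (h x). split; [exists x; split; auto | auto].
    destruct (hS s Hs) as [x Hx]. exists (F (h x)), x; split; auto. }
  split; [auto|split; [auto|]].
  intros s Hs. apply (face hM' (image F (Defs.union (image f s) (image g s)))).
  apply hF, Hfg, Hs.
  intros y [[x [Hx Hy]]|[x [Hx Hy]]]; [exists (f x)| exists (g x)]; split; auto;
    [left|right]; exists x; split; auto.
  destruct (hS s Hs) as [x Hx]. exists (F (f x)). left. exists x. split; auto.
Qed.

Lemma homot_sym {K K'} (S : vset (vtx K) -> Prop) (hK' : is_complex K') f g :
  homot_on S K' f g -> homot_on S K' g f.
Proof.
  unfold homot_on. apply crt_sym. intros a b (Ha&Hb&Hab). split; [auto|split;[auto|]].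
  intros s Hs. specialize (Hab s Hs). apply (face hK' _ _ Hab).
  intros y [H|H]; [right|left]; auto.
  destruct (simp_ne hK' _ Hab) as [y [H|H]]; exists y; [right|left]; auto.
Qed.

Lemma homot_const {K K'} (S : vset (vtx K) -> Prop) (hK' : is_complex K')
  (cK' : edge_connected K') (hS : forall s, S s -> nonempty s) (u w : vtx K') :
  homot_on S K' (fun _ => u) (fun _ => w).
Proof.
  unfold homot_on.
  apply (crt_map (fun x y => simp K' (pairset x y)) _ (fun (c : vtx K') (_ : vtx K) => c) u w); [|apply cK'].
  intros a b Hab.
  assert (SO : forall c, simp_on S K' (fun _ : vtx K => c)).
  { intros c s Hs. apply (simp_sub_single hK' _ c).
    destruct (hS s Hs) as [x Hx]. exists c, x; split; auto.
    intros y [x [_ Hy]]. red. subst. reflexivity. }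
  split; [apply SO|split;[apply SO|]].
  intros s Hs. apply (face hK' (pairset a b)); auto.
  intros y [[x [_ Hy]]|[x [_ Hy]]]; red; subst; [left|right]; reflexivity.
  destruct (hS s Hs) as [x Hx]. exists a. left. exists x. split; auto.
Qed.

Lemma prod_cx {K M} (hK : is_complex K) (hM : is_complex M) : is_complex (prodSC K M).
Proof.
  split; [|split; [|split]].
  - intros s [H1 H2]. destruct (simp_fin hK _ H1) as [l1 Hl1].
    destruct (simp_fin hM _ H2) as [l2 Hl2].
    exists (list_prod l1 l2). intros [x y] Hxy.
    apply in_prod; [apply Hl1; exists (x,y) | apply Hl2; exists (x,y)]; split; auto.
  - intros s [H1 _]. destruct (simp_ne hK _ H1) as [x [p [Hp _]]]. exists p; auto.
  - intros s t [H1 H2] Hts [p Hp]. split.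
    + apply (face hK _ _ H1). intros x [q [Hq Hx]]. exists q; split; auto.
      exists (fst p), p; split; auto.
    + apply (face hM _ _ H2). intros x [q [Hq Hx]]. exists q; split; auto.
      exists (snd p), p; split; auto.
  - intros v. split.
    + apply (simp_sub_single hK _ (fst v)). exists (fst v), v; split; reflexivity.
      intros x [q [Hq Hx]]. red in Hq. red. subst. reflexivity.
    + apply (simp_sub_single hM _ (snd v)). exists (snd v), v; split; reflexivity.
      intros x [q [Hq Hx]]. red in Hq. red. subst. reflexivity.
Qed.

Lemma prod_connected {K M} (hK : is_complex K) (hM : is_complex M) :
  edge_connected K -> edge_connected M -> edge_connected (prodSC K M).
Proof.
  intros cK cM [a b] [a' b'].
  apply rt_trans with (y := (a', b)).
  - apply (crt_map (fun x y => simp K (pairset x y)) _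
             (fun x : vtx K => ((x, b) : vtx (prodSC K M))) a a'); [|apply cK].
    intros x y Hxy. split.
    + apply (face hK _ _ Hxy).
      intros z [p [[Hp|Hp] Hz]]; subst; simpl; red; [left|right]; reflexivity.
      exists x, (x,b). split; [left; reflexivity| reflexivity].
    + apply (simp_sub_single hM _ b). exists b, (x,b); split; [left; reflexivity| reflexivity].
      intros z [p [[Hp|Hp] Hz]]; subst; reflexivity.
  - apply (crt_map (fun x y => simp M (pairset x y)) _
             (fun y : vtx M => ((a', y) : vtx (prodSC K M))) b b'); [|apply cM].
    intros x y Hxy. split.
    + apply (simp_sub_single hK _ a'). exists a', (a',x); split; [left; reflexivity| reflexivity].
      intros z [p [[Hp|Hp] Hz]]; subst; reflexivity.
    + apply (face hM _ _ Hxy).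
      intros z [p [[Hp|Hp] Hz]]; subst; simpl; red; [left|right]; reflexivity.
      exists x, (a',x). split; [left; reflexivity| reflexivity].
Qed.

Lemma scat_exists (K : SC) (hK : is_complex K) (l : list (vtx K)) (hl : forall v, In v l)
  (cK : edge_connected K) (w0 : vtx K) :
  exists k, @PSD K K (fun v => v) (fun _ => w0) k.
Proof.
  exists (length l - 1).
  exists (fun j s => simp K s /\ simp K (fun x => s x \/ x = nth j l w0)).
  split; [split|].
  - intros j _. split.
    + intros s [H _]; exact H.
    + intros s t [H1 H2] Hts Hne. split.
      * exact (face hK _ _ H1 Hts Hne).
      * apply (face hK _ _ H2). intros x [Hx|Hx]; [left; apply Hts; exact Hx | right; exact Hx].
        destruct Hne as [x Hx]. exists x. left. exact Hx.
  - intros s Hs. destruct (simp_ne hK _ Hs) as [u Hu].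
    destruct (In_nth l u w0 (hl u)) as [j [Hj Hn]]. exists j. split. lia. split. exact Hs.
    apply (face hK _ _ Hs). intros x [Hx|Hx]. exact Hx. rewrite Hx, Hn. exact Hu.
    exists u. left. exact Hu.
  - intros j _.
    assert (hS : forall s, (simp K s /\ simp K (fun x => s x \/ x = nth j l w0)) -> nonempty s).
    { intros s [H _]. exact (simp_ne hK _ H). }
    eapply homot_trans; [|apply (homot_const _ hK cK hS (nth j l w0) w0)].
    unfold homot_on. apply rt_step. split; [|split].
    + intros s [H _]. apply (face hK _ _ H). intros x [y [Hy Hx]]. subst. exact Hy.
      destruct (simp_ne hK _ H) as [x Hx]. exists x, x. split; auto.
    + intros s Hs. apply (simp_sub_single hK _ (nth j l w0)).
      destruct (hS s Hs) as [x Hx]. exists (nth j l w0), x; split; auto.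
      intros y [x [_ Hy]]. red. subst. reflexivity.
    + intros s Hs. apply (face hK _ _ (proj2 Hs)).
      intros x [[y [Hy Hx]]|[y [Hy Hx]]]; subst; [left; exact Hy | right; reflexivity].
      destruct (hS s Hs) as [x Hx]. exists x. left. exists x. split; auto.
Qed.

Lemma I4 (L : SC) (cxL : is_complex L) (cL : edge_connected L) (w0 : vtx (prodSC L L)) k :
  @PSD (prodSC L L) (prodSC L L) (fun v => v) (fun _ => w0) k -> @PSD (prodSC L L) L fst snd k.
Proof.
  intros [S [HS Hh]]. exists S. split; auto. intros j Hj.
  pose proof (prod_cx cxL cxL) as cxP.
  assert (hS : forall s, S j s -> nonempty s).
  { intros s Hs. apply (simp_ne cxP). destruct HS as [HS _]. apply (HS j Hj). auto. }
  assert (Hf : simplicial (K:=prodSC L L) (K':=L) fst). { intros s [H1 H2]; auto. }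
  assert (Hs : simplicial (K:=prodSC L L) (K':=L) snd). { intros s [H1 H2]; auto. }
  pose proof (homot_comp (M:=prodSC L L) (M':=L) (S j) fst Hf cxL hS _ _ (Hh j Hj)) as A.
  pose proof (homot_comp (M:=prodSC L L) (M':=L) (S j) snd Hs cxL hS _ _ (Hh j Hj)) as B.
  eapply homot_trans; [exact A|].
  eapply homot_trans; [apply (homot_const (S j) cxL cL hS (fst w0) (snd w0))|].
  apply homot_sym; auto.
Qed.

Lemma I1 (L L' : SC) (phi : vtx L -> vtx L') (cxL : is_complex L) (cxL' : is_complex L')
  (cL' : edge_connected L') (hphi : simplicial phi) v0 v1 k :
  @PSD L L (fun v => v) (fun _ => v1) k -> @PSD L L' phi (fun _ => phi v0) k.
Proof.
  intros [S [HS Hh]]. exists S. split; auto. intros j Hj.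
  assert (hS : forall s, S j s -> nonempty s).
  { intros s Hs. apply (simp_ne cxL). destruct HS as [HS _]. apply (HS j Hj). auto. }
  pose proof (homot_comp (S j) phi hphi cxL' hS _ _ (Hh j Hj)) as A. cbv beta in A.
  eapply homot_trans; [exact A|]. apply (homot_const (S j) cxL' cL' hS).
Qed.

Lemma path_end_spec {L : SC} (d : path L) :
  exists m, forall i, m <= i -> proj1_sig d i = path_end d.
Proof.
  unfold path_end. destruct (constructive_indefinite_description _ _) as [m Hm]. simpl.
  exists m. intros i Hi. apply Hm; auto.
Qed.

Lemma unif {A B} (f : A -> nat -> B) (c : A -> B)
  (H : forall x, exists m, forall i, m <= i -> f x i = c x) :
  forall l : list A, exists M, forall x, In x l -> forall i, M <= i -> f x i = c x.
Proof.
  induction l as [|a l IH]. exists 0; intros x [].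
  destruct IH as [M HM]. destruct (H a) as [m Hm].
  exists (max m M). intros x [<-|Hx] i Hi. apply Hm; lia. apply HM; auto; lia.
Qed.

Lemma I2 (L L' : SC) (phi : vtx L -> vtx L') (cxL : is_complex L) (cxL' : is_complex L')
  (lL : list (vtx L)) (HlL : forall v, In v lL)
  (hinj : forall x y, phi x = phi y -> x = y) (v1 : vtx L) k :
  @PSG (pathSC L) (prodSC L L') (pi_phi phi) k -> @PSD L L (fun v => v) (fun _ => v1) k.
Proof.
  intros [Bs [[HB1 HB2] HB]].
  pose proof (prod_cx cxL cxL') as cxP.
  pose (pr := fun x : vtx L => ((x, phi v1) : vtx (prodSC L L'))).
  assert (Hne : forall j, j <= k -> forall sg, Bs j (image pr sg) -> nonempty sg).
  { intros j Hj sg Hsg. destruct (HB1 j Hj) as [Hsub _].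
    destruct (simp_ne cxP _ (Hsub _ Hsg)) as [p [x [Hx _]]]. exists x; auto. }
  exists (fun j sg => Bs j (image pr sg)).
  split; [split|].
  - intros j Hj. split.
    + intros sg Hsg. destruct (HB1 j Hj) as [Hsub _]. pose proof (Hsub _ Hsg) as [H1 _].
      apply (face cxL _ _ H1). intros x Hx. exists (pr x); split; [exists x; split; auto | reflexivity].
      exact (Hne j Hj sg Hsg).
    + intros s t Hs Hts Hne'. destruct (HB1 j Hj) as [_ Hface]. apply (Hface _ _ Hs).
      intros p [x [Hx Hp]]. exists x; split; auto.
      destruct Hne' as [x Hx]. exists (pr x), x; split; auto.
  - intros sg Hsg. destruct (HB2 (image pr sg)) as [j [Hj Hjs]].
    + destruct (simp_ne cxL _ Hsg) as [x0 Hx0]. split.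
      * apply (face cxL _ _ Hsg). intros x [p [[y [Hy Hp]] Hx]]. subst. simpl. auto.
        exists x0, (pr x0). split; auto. exists x0; auto.
      * apply (simp_sub_single cxL' _ (phi v1)).
        exists (phi v1), (pr x0). split; auto. exists x0; auto.
        intros y [p [[x [Hx Hp]] Hy]]. subst. reflexivity.
    + exists j; auto.
  - intros j Hj. destruct (HB j Hj) as [s [Hs Hsec]].
    pose (cond := fun x => Bs j (single (pr x))).
    assert (Hcond : forall x, cond x -> path_start (s (pr x)) = x /\ path_end (s (pr x)) = v1).
    { intros x Hx. pose proof (Hsec _ Hx) as E. unfold pi_phi in E. injection E as E1 E2.
      split; auto. }
    destruct (unif (fun x i => proj1_sig (s (pr x)) i) (fun x => path_end (s (pr x)))
                (fun x => path_end_spec _) lL) as [M HM].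
    pose (G := fun i x => match excluded_middle_informative (cond x) with
                | left _ => proj1_sig (s (pr x)) i
                | right _ => match i with 0 => x | S _ => v1 end end).
    assert (HG0 : G 0 = fun x => x).
    { apply functional_extensionality. intros x. unfold G.
      destruct (excluded_middle_informative (cond x)) as [c|c]; [apply (proj1 (Hcond x c))|reflexivity]. }
    assert (HGM : G (S M) = fun _ => v1).
    { apply functional_extensionality. intros x. unfold G.
      destruct (excluded_middle_informative (cond x)) as [c|c]; [|reflexivity].
      rewrite (HM x (HlL x) (S M)) by lia. apply (proj2 (Hcond x c)). }
    pose (PT := fun sg i v => exists d, image s (image pr sg) d /\
                   (v = proj1_sig d i \/ v = proj1_sig d (S i))).
    assert (Key : forall sg, Bs j (image pr sg) -> forall x, sg x -> forall i,
               PT sg i (G i x) /\ PT sg i (G (S i) x)).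
    { intros sg Hsg x Hx i.
      assert (Hc : cond x).
      { destruct (HB1 j Hj) as [_ Hf]. apply (Hf _ _ Hsg).
        intros p Hp. red in Hp. subst. exists x; split; auto.
        exists (pr x). reflexivity. }
      assert (HGi : forall i', G i' x = proj1_sig (s (pr x)) i').
      { intros i'. unfold G. destruct (excluded_middle_informative (cond x)); [reflexivity|contradiction]. }
      rewrite !HGi. split; exists (s (pr x)); (split; [exists (pr x); split; [exists x; split; auto|reflexivity]|]);
        [left|right]; reflexivity. }
    pose proof (seq_crt (fun a b => simp_on (fun sg => Bs j (image pr sg)) L a /\ simp_on (fun sg => Bs j (image pr sg)) L b /\ contig_on (fun sg => Bs j (image pr sg)) L a b) G (S M)) as X.
    rewrite HG0, HGM in X. apply X. clear X.
    intros i _.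
    split; [|split].
    + intros sg Hsg. pose proof (Hs _ Hsg) as (_ & _ & Hpt). apply (face cxL _ _ (Hpt i)).
      intros v [x [Hx Hv]]. subst v. apply (Key sg Hsg x Hx i).
      destruct (Hne j Hj sg Hsg) as [x Hx]. exists (G i x), x. split; auto.
    + intros sg Hsg. pose proof (Hs _ Hsg) as (_ & _ & Hpt). apply (face cxL _ _ (Hpt i)).
      intros v [x [Hx Hv]]. subst v. apply (Key sg Hsg x Hx i).
      destruct (Hne j Hj sg Hsg) as [x Hx]. exists (G (S i) x), x. split; auto.
    + intros sg Hsg. pose proof (Hs _ Hsg) as (_ & _ & Hpt). apply (face cxL _ _ (Hpt i)).
      intros v [[x [Hx Hv]]|[x [Hx Hv]]]; subst v; apply (Key sg Hsg x Hx i).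
      destruct (Hne j Hj sg Hsg) as [x Hx]. exists (G i x). left. exists x. split; auto.
Qed.

Definition auxN (L' : SC) (tau : vset (vtx L')) (t0 : vtx L') : SC :=
  mkSC (vtx L') (fun s => nonempty s /\ (subset s tau \/ exists v, subset s (pairset v t0))).

Lemma psi_simplicial (L L' : SC) (phi : vtx L -> vtx L') (cxL : is_complex L)
  (hL' : finite_complex L')
  (hinj : forall x y, phi x = phi y -> x = y) (psi : vtx L' -> vtx L)
  (Hpsi : forall y, phi (psi y) = y)
  (hfib : finite_fibration phi) : simplicial psi.
Proof.
  destruct hL' as [cxL' [lL' HlL']].
  intros tau Htau. destruct (simp_ne cxL' _ Htau) as [t0 Ht0].
  destruct (simp_fin cxL' _ Htau) as [ltau Hltau].
  pose (N := auxN L' tau t0).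
  assert (cxN : is_complex N).
  { split; [|split; [|split]].
    - intros s [_ [Hs|[v Hs]]].
      + exists ltau; intros x Hx; apply Hltau, Hs, Hx.
      + exists (v :: t0 :: nil); intros x Hx; destruct (Hs x Hx); subst; simpl; auto.
    - intros s [H _]; exact H.
    - intros s t [_ [Hs|[v Hs]]] Hts Hne; split; auto; [left|right; exists v];
        intros x Hx; auto.
    - intros v; split. exists v; reflexivity. right; exists v; intros x Hx; left; exact Hx. }
  assert (fN : finite_complex N). { split; auto. exists lL'; auto. }
  assert (eN : edge_connected N).
  { intros v w'. apply rt_trans with t0.
    - apply rt_step. split. exists v; left; reflexivity.
      right; exists v; intros x Hx; exact Hx.
    - apply rt_step. split. exists t0; left; reflexivity.
      right. exists w'. intros x [Hx|Hx]; [right|left]; auto. }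
  pose (g := fun _ : vtx (prodSC N (Im 0)) => psi t0).
  pose (G := fun p : vtx (prodSC N (Im 1)) =>
         if Nat.eqb (proj1_sig (snd p)) 0 then t0
         else (if excluded_middle_informative (tau (fst p)) then fst p else t0)).
  assert (Hg : simplicial g).
  { intros s [H1 _]. apply (simp_sub_single cxL _ (psi t0)).
    destruct (simp_ne cxN _ H1) as [a [p [Hp _]]]. exists (psi t0), p; split; auto.
    intros y [p [_ Hy]]. red. subst. reflexivity. }
  assert (HG : simplicial G).
  { intros s [H1 _]. apply (face cxL' _ _ Htau).
    intros y [p [_ Hy]]. subst y. unfold G.
    destruct (Nat.eqb _ 0); [auto| destruct (excluded_middle_informative _); auto].
    destruct (simp_ne cxN _ H1) as [a [p [Hp _]]]. exists (G p), p; split; auto. }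
  assert (Hcomp : forall x, phi (g x) = G (incl0 N 1 x)).
  { intros x. unfold g, G, incl0. simpl. apply Hpsi. }
  destruct (hfib N fN eN 1 (le_n 1) g G Hg HG Hcomp) as [Gt [HGt [_ Hlift]]].
  pose (one1 := exist (fun i => i <= 1) 1 (le_n 1) : vtx (Im 1)).
  pose (T := fun p : vtx (prodSC N (Im 1)) => tau (fst p) /\ snd p = one1).
  assert (HT : simp (prodSC N (Im 1)) T).
  { split.
    - split. exists t0, ((t0, one1) : vtx (prodSC N (Im 1))). split; [split; auto | reflexivity].
      left. intros y [p [[Hp _] Hy]]. subst; auto.
    - split. exists one1, ((t0, one1) : vtx (prodSC N (Im 1))). split; [split; auto | reflexivity].
      exists 0. intros x [p [[_ Hp] Hx]]. subst x. rewrite Hp. right. reflexivity. }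
  pose proof (HGt T HT) as HI.
  apply (face cxL _ _ HI).
  - intros y [n [Hn Hy]]. subst y. exists ((n, one1) : vtx (prodSC N (Im 1))).
    split. split; auto. apply hinj. rewrite Hlift, Hpsi. unfold G; simpl.
    destruct (excluded_middle_informative (tau n)); [reflexivity|contradiction].
  - exists (psi t0), t0; auto.
Qed.

Lemma I3 (L L' : SC) (phi : vtx L -> vtx L') (cxL : is_complex L) (cxL' : is_complex L')
  (hphi : simplicial phi) (psi : vtx L' -> vtx L) (Hpsi : forall y, phi (psi y) = y)
  (hpsi : simplicial psi) k :
  @PSD (prodSC L L) L fst snd k -> @PSG (pathSC L) (prodSC L L') (pi_phi phi) k.
Proof.
  intros [C [[HC1 HC2] HC]].
  pose proof (prod_cx cxL cxL) as cxLL. pose proof (prod_cx cxL cxL') as cxLL'.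
  pose (io := fun p : vtx (prodSC L L') => ((fst p, psi (snd p)) : vtx (prodSC L L))).
  assert (Hio : simplicial io).
  { intros t [H1 H2]. split.
    - apply (face cxL _ _ H1). intros x [q [[p [Hp Hq]] Hx]]. subst. exists p. split; auto.
      destruct (simp_ne cxL _ H1) as [x [p [Hp _]]]. exists (fst p), (io p).
      split; [exists p; auto| reflexivity].
    - apply (face cxL _ _ (hpsi _ H2)). intros x [q [[p [Hp Hq]] Hx]]. subst.
      exists (snd p). split; [exists p; auto | reflexivity].
      destruct (simp_ne cxL' _ H2) as [x [p [Hp _]]]. exists (snd (io p)), (io p).
      split; [exists p; auto| reflexivity]. }
  assert (Hback : forall t, simp (prodSC L L) (image io t) -> simp (prodSC L L') t).
  { intros t [H1 H2]. split.
    - apply (face cxL _ _ H1). intros x [p [Hp Hx]]. exists (io p).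
      split; [exists p; auto| subst; reflexivity].
      destruct (simp_ne cxL _ H1) as [x [q [[p [Hp _]] _]]]. exists (fst p), p; auto.
    - apply (face cxL' _ _ (hphi _ H2)). intros y [p [Hp Hy]]. exists (snd (io p)).
      split. exists (io p); split; [exists p; auto| reflexivity]. subst; simpl. apply Hpsi.
      destruct (simp_ne cxL _ H1) as [x [q [[p [Hp _]] _]]]. exists (snd p), p; auto. }
  exists (fun j t => C j (image io t)).
  split; [split|].
  - intros j Hj. split.
    + intros t Ht. destruct (HC1 j Hj) as [Hsub _]. exact (Hback _ (Hsub _ Ht)).
    + intros t t' Ht Htt Hne. destruct (HC1 j Hj) as [_ Hf]. apply (Hf _ _ Ht).
      intros q [p [Hp Hq]]. exists p; auto.
      destruct Hne as [p Hp]. exists (io p), p; auto.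
  - intros t Ht. destruct (HC2 _ (Hio _ Ht)) as [j [Hj H]]. exists j; auto.
  - intros j Hj.
    destruct (crt_seq _ _ _ (HC j Hj)) as [n [a [Ha0 [Han Hastep]]]].
    pose (cond := fun v => C j (image io (single v))).
    assert (Hpair: forall v, cond v -> forall i, simp L (pairset (a i (io v)) (a (S i) (io v)))).
    { intros v Hv i. destruct (lt_dec i n) as [Hi|Hi].
      - destruct (Hastep i Hi) as [_ [_ Hc]]. apply (face cxL _ _ (Hc _ Hv)).
        + intros x [Hx|Hx]; subst; [left|right]; exists (io v);
            (split; [exists v; split; reflexivity|reflexivity]).
        + exists (a i (io v)); left; reflexivity.
      - rewrite (Han i), (Han (S i)) by lia. apply (simp_sub_single cxL _ (snd (io v))).
        exists (snd (io v)); left; reflexivity. intros x [Hx|Hx]; exact Hx. }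
    assert (Hpath : forall v, cond v -> is_path L (fun i => a i (io v))).
    { intros v Hv. split. apply Hpair; auto. exists n. intros i Hi.
      rewrite (Han i Hi), (Han n (le_n n)). reflexivity. }
    assert (Hcst : forall x : vtx L, is_path L (fun _ => x)).
    { intros x. split. intros i. apply (simp_sub_single cxL _ x). exists x; left; reflexivity.
      intros y [Hy|Hy]; exact Hy. exists 0; intros; reflexivity. }
    pose (s := fun v : vtx (prodSC L L') =>
               match excluded_middle_informative (cond v) with
               | left H => exist (is_path L) (fun i => a i (io v)) (Hpath v H)
               | right _ => exist (is_path L) (fun _ => fst v) (Hcst (fst v)) end
               : vtx (pathSC L)).
    assert (Hs : forall v, cond v -> forall i, proj1_sig (s v) i = a i (io v)).
    { intros v Hv i. unfold s.
      destruct (excluded_middle_informative (cond v)); [reflexivity|contradiction]. }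
    exists s. split.
    + intros t Ht.
      assert (Hct : forall v, t v -> cond v).
      { intros v Hv. destruct (HC1 j Hj) as [_ Hf]. apply (Hf _ _ Ht).
        intros q [p [Hp Hq]]. exists p. split; [red in Hp; subst; exact Hv | exact Hq].
        exists (io v), v; split; reflexivity. }
      destruct (HC1 j Hj) as [Hsub' _]. pose proof (Hsub' _ Ht) as HT.
      pose proof (Hback _ HT) as Ht'.
      split; [|split].
      * destruct (simp_fin cxLL' _ Ht') as [lt Hlt]. exists (map s lt).
        intros d [v [Hv Hd]]. subst. apply in_map, Hlt, Hv.
      * destruct (simp_ne cxLL' _ Ht') as [v Hv]. exists (s v), v; auto.
      * intros i. destruct (simp_ne cxLL' _ Ht') as [v0 Hv0].
        destruct (lt_dec i n) as [Hi|Hi].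
        -- destruct (Hastep i Hi) as [_ [_ Hc]]. apply (face cxL _ _ (Hc _ Ht)).
           ++ intros x [d [[v [Hv Hd]] Hx]]. subst d.
              rewrite (Hs v (Hct v Hv) i), (Hs v (Hct v Hv) (S i)) in Hx.
              destruct Hx as [Hx|Hx]; subst x; [left|right]; exists (io v);
                (split; [exists v; split; auto|reflexivity]).
           ++ exists (a i (io v0)), (s v0). split. exists v0; auto. left. rewrite Hs; auto.
        -- apply (face cxL _ _ (proj2 HT)).
           ++ intros x [d [[v [Hv Hd]] Hx]]. subst d.
              rewrite (Hs v (Hct v Hv) i), (Hs v (Hct v Hv) (S i)) in Hx.
              rewrite (Han i), (Han (S i)) in Hx by lia.
              destruct Hx as [Hx|Hx]; subst x; exists (io v);
                (split; [exists v; split; auto|reflexivity]).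
           ++ exists (a i (io v0)), (s v0). split. exists v0; auto. left. rewrite Hs; auto.
    + intros v Hv. destruct v as [x y].
      assert (Hv' : cond (x,y)) by exact Hv.
      unfold pi_phi, path_start. rewrite (Hs _ Hv' 0), Ha0.
      destruct (path_end_spec (s (x,y))) as [m Hm].
      rewrite <- (Hm (max m n)) by lia. rewrite (Hs _ Hv'), (Han (max m n)) by lia.
      simpl. rewrite Hpsi. reflexivity.
Qed.

Theorem corollary6p5 (L L' : SC) (phi : vtx L -> vtx L')
  (hL : finite_complex L) (hL' : finite_complex L')
  (cL : edge_connected L) (cL' : edge_connected L')
  (hphi : simplicial phi)
  (hbij : (forall x y, phi x = phi y -> x = y) /\ (forall y, exists x, phi x = y))
  (hfib : finite_fibration phi)
  (v0 v1 : vtx L) (w0 : vtx (prodSC L L)) :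
  scat_map phi v0 <= scat L v1 /\
  scat L v1 <= TC_map phi /\
  TC_map phi <= TC L /\
  TC L <= scat (prodSC L L) w0.
Proof.
  destruct hbij as [hinj hsurj].
  pose proof hL' as hL'0.
  destruct hL as [cxL [lL HlL]]. destruct hL' as [cxL' [lL' HlL']].
  pose (psi := fun y => proj1_sig (constructive_indefinite_description _ (hsurj y))).
  assert (Hpsi : forall y, phi (psi y) = y).
  { intros y. unfold psi. destruct (constructive_indefinite_description _ _). auto. }
  pose proof (psi_simplicial L L' phi cxL hL'0 hinj psi Hpsi hfib) as hpsi.
  assert (E4 : exists k, @PSD (prodSC L L) (prodSC L L) (fun v => v) (fun _ => w0) k).
  { apply scat_exists with (l := list_prod lL lL). apply prod_cx; auto.
    intros [a b]; apply in_prod; auto. apply prod_connected; auto. }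
  assert (E3 : exists k, @PSD (prodSC L L) L fst snd k).
  { destruct E4 as [k Hk]; exists k; apply I4 with w0; auto. }
  assert (E2 : exists k, @PSG (pathSC L) (prodSC L L') (pi_phi phi) k).
  { destruct E3 as [k Hk]; exists k; eapply I3; eauto. }
  assert (E1 : exists k, @PSD L L (fun v => v) (fun _ => v1) k).
  { destruct E2 as [k Hk]; exists k; eapply I2; eauto. }
  unfold scat_map, scat, TC, TC_map. rewrite !SD_eq, SG_eq.
  split; [|split; [|split]]; apply least_mono; auto; intros k Hk.
  - eapply I1; eauto.
  - eapply I2; eauto.
  - eapply I3; eauto.
  - eapply I4; eauto.
Qed.
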